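(* Let $m\ge4$ be an integer and $d=\lfloor m/2\rfloor$. For $0\le i\le d$ let $m_i=\binom{2m}{2i}-\binom{2m}{2i-1}$ (with $\binom{2m}{-1}=0$) be the eigenvalue multiplicities of the folded Johnson graph $\overline{J}(2m,m)$. Then $m_i^2\ge m_{i-1}m_{i+1}$ for all $1\le i\le d-1$.
   Context: The folded Johnson graph $\overline{J}(2m,m)$ is the quotient of the Johnson graph $J(2m,m)$ (vertices the $m$-subsets of a $2m$-set, adjacent when they meet in $m-1$ elements) obtained by identifying each $m$-subset with its complement; it is distance-regular of diameter $\lfloor m/2\rfloor$, and in the standard ordering its eigenvalue multiplicities are $m_i=\binom{2m}{2i}-\binom{2m}{2i-1}$. *)

(* Defs.v *)
From mathcomp Require Import all_boot all_algebra.
Set Implicit Arguments. Unset Strict Implicit. Unset Printing Implicit Defensive.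
Import GRing.Theory Num.Theory.
Local Open Scope ring_scope.

(* binomial with 'C(n, -1) = 0 : the subtracted term vanishes for i = 0 *)
Definition binom_pred (n i : nat) : nat :=
  if i is i'.+1 then 'C(n, i'.*2.+1) else 0%N.

(* m_i = C(2m, 2i) - C(2m, 2i-1), as an integer (no truncation) *)
Definition fjmult (m i : nat) : int :=
  ('C(m.*2, i.*2))%:Z - (binom_pred m.*2 i)%:Z.

(* Main.v *)
Require Import Defs.
From mathcomp Require Import all_boot all_algebra zify.
Import GRing.Theory Num.Theory.
Local Open Scope ring_scope.

Lemma mj (m j : nat) : (j <= m)%N ->
  (m.*2.+1)%:Z * fjmult m j = ('C(m.*2.+1, j.*2))%:Z * ((m.*2.+1)%:Z - (j.*2.*2)%:Z).
Proof.
move=> hj; rewrite /fjmult.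
have H1 := mul_bin_down m.*2.+1 j.*2.
case: j hj H1 => [|j] hj H1 /=.
  rewrite /= !bin0; lia.
have H2 := mul_bin_diag m.*2.+1 (j.*2.+1).
rewrite /= in H1 H2.
rewrite -!doubleS in H2 *.
have hh : (j.+1.*2 <= m.*2.+1)%N by rewrite ltnW // ltnS leq_double.
lia.
Qed.

Lemma lc1 (N j : nat) : ('C(N, j) * 'C(N, j.+2) <= 'C(N, j.+1) ^ 2)%N.
Proof.
have A := mul_bin_left N j. have B := mul_bin_left N j.+1.
case: (leqP j.+1 N) => hj; last first.
  rewrite (@bin_small N j.+2) ?muln0 //; lia.
nia.
Qed.

Lemma lc2 (N j : nat) : (j.+2 <= N)%N -> ('C(N, j) * 'C(N, j.+4) <= 'C(N, j.+2) ^ 2)%N.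
Proof.
move=> hN.
have P := lc1 N j. have Q := lc1 N j.+1. have R := lc1 N j.+2.
have pos : (0 < 'C(N, j.+2))%N by rewrite bin_gt0.
move: P Q R pos.
set a0 := 'C(N, j); set a1 := 'C(N, j.+1); set a2 := 'C(N, j.+2);
set a3 := 'C(N, j.+3); set a4 := 'C(N, j.+4) => P Q R pos.
have S : (a2 ^ 2 * (a0 * a4) <= a2 ^ 2 * a2 ^ 2)%N.
  have T : (a0 * a2 * (a2 * a4) <= a1 ^ 2 * a3 ^ 2)%N by apply: leq_mul.
  have U : (a1 ^ 2 * a3 ^ 2 = (a1 * a3) ^ 2)%N by rewrite expnMn.
  have V : ((a1 * a3) ^ 2 <= (a2 ^ 2) ^ 2)%N by rewrite leq_exp2r.
  rewrite -U in V. have := leq_trans T V. lia.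
by rewrite leq_pmul2l ?expn_gt0 ?pos in S.
Qed.

Theorem corollary6 (m i : nat) :
  (4 <= m)%N -> (1 <= i)%N -> (i <= (m./2).-1)%N ->
  fjmult m (i.-1) * fjmult m i.+1 <= fjmult m i ^+ 2.
Proof.
case: i => [//|i] hm _ hi /=.
have hi2 : (i.+2 <= m./2)%N by lia.
have hm2 : ((m./2).*2 <= m)%N by rewrite -{2}(odd_double_half m); lia.
have ha := mj m i ltac:(lia).
have hb := mj m i.+1 ltac:(lia).
have hc := mj m i.+2 ltac:(lia).
have L := lc2 m.*2.+1 i.*2 ltac:(lia).
rewrite !doubleS in hb hc.
move: ha hb hc L.
set A := 'C(_, i.*2); set B := 'C(_, i.*2.+2); set C := 'C(_, i.*2.+4).
set fa := fjmult _ _; set fb := fjmult _ _; set fc := fjmult _ _.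
move=> ha hb hc L.
clearbody A B C fa fb fc.
have key : (m.*2.+1%:Z * fa) * (m.*2.+1%:Z * fc) <= (m.*2.+1%:Z * fb) ^+ 2.
  rewrite ha hb hc.
  have hx : (0 < (m.*2.+1)%:Z - (i.*2.*2.+4)%:Z) by lia.
  move: hx; set x := (_ - _) => hx.
  have e1 : (m.*2.+1)%:Z - (i.*2.*2)%:Z = x + 4 by rewrite /x; lia.
  have e2 : (m.*2.+1)%:Z - (i.*2.*2.+4.+4)%:Z = x - 4 by rewrite /x; lia.
  rewrite e1 e2. clearbody x.
  have L' : (A%:Z * C%:Z <= B%:Z ^+ 2) by lia.
  nia.
nia.
Qed.
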